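(* Let $X\subset\mathbb{R}^m$ be a compact algebraic set and $f=(f_1,\dots,f_m):\mathbb{R}^n\to\mathbb{R}^m$ a polynomial map. Let $K\subset\mathbb{R}^n$ be a compact set with non-empty interior in $\mathbb{R}^n$ such that $f(K)\subset X$. Then $f(K)$ is a singleton contained in $X$. *)

(* Defs.v *)
From HB Require Import structures.
From mathcomp Require Import all_boot all_order all_algebra.
From mathcomp Require Import all_classical all_reals all_analysis.
From mathcomp Require mpoly.
Set Implicit Arguments. Unset Strict Implicit. Unset Printing Implicit Defensive.
Import Order.TTheory GRing.Theory Num.Theory.
Import numFieldNormedType.Exports.
Local Open Scope classical_set_scope.
Local Open Scope ring_scope.

(* Points of R^n are row vectors 'rV[R]_n (with their canonical normed topology). *)

Definition peval {R : realType} {n : nat} (p : mpoly.mpoly n R) (x : 'rV[R]_n) : R :=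
  mpoly.meval (fun i => x ord0 i) p.

Definition algebraic_set {R : realType} {m : nat} (X : set 'rV[R]_m) : Prop :=
  exists (k : nat) (P : 'I_k -> mpoly.mpoly m R),
    X = [set x | forall j : 'I_k, peval (P j) x = 0].

Definition polymap {R : realType} {n m : nat} (f : 'I_m -> mpoly.mpoly n R)
  (x : 'rV[R]_n) : 'rV[R]_m := \row_(i < m) peval (f i) x.

(* Main.v *)
Require Import Defs.
From HB Require Import structures.
From mathcomp Require Import all_boot all_order all_algebra.
From mathcomp Require Import all_classical all_reals all_analysis.
From mathcomp Require mpoly polyrcf.
From mathcomp Require Import lra.
Import Order.TTheory GRing.Theory Num.Theory.
Import numFieldNormedType.Exports.
Local Open Scope classical_set_scope.
Local Open Scope ring_scope.
Lemma poly_eq0_near0 (R : realFieldType) (p : {poly R}) (e : R) :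
  0 < e -> (forall t, `|t| < e -> p.[t] = 0) -> p = 0.
Proof.
move=> e0 H; apply/eqP/negPn/negP => pn0.
pose rs := [seq e / (i.+2)%:R | i <- iota 0 (size p)].
suff: (size rs < size p)%N by rewrite size_map size_iota ltnn.
apply: max_poly_roots pn0 _ _.
  apply/allP => y /mapP [i _ ->]; apply/rootP; apply: H.
  rewrite ger0_norm ?divr_ge0 ?ltW // ltr_pdivrMr // ltr_pMr // ltr1n //.
rewrite map_inj_uniq ?iota_uniq // => i j /(mulfI (lt0r_neq0 e0)) /invr_inj /eqP.
by rewrite eqr_nat => /eqP [].
Qed.

Lemma poly_bounded_size (R : realFieldType) (p : {poly R}) (B : R) :
  (forall t, `|p.[t]| <= B) -> (size p <= 1)%N.
Proof.
move=> H; rewrite leqNgt; apply/negP => sp.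
have lc0 : lead_coef p != 0 by rewrite lead_coef_eq0 -size_poly_gt0 (ltn_trans _ sp).
case: (ltrgtP (lead_coef p) 0) => [lt0|gt0|]; last by move/eqP; rewrite (negPf lc0).
- have l1 : 0 < lead_coef (- p) by rewrite lead_coefN oppr_gt0.
  have s1 : (1 < size (- p))%N by rewrite size_polyN.
  have [n Hn] := polyrcf.poly_lim_infty (B + 1) l1 s1.
  have := Hn n (lexx n); have := H n; rewrite hornerN => h1 h2.
  rewrite -normrN in h1.
  have := le_trans h2 (le_trans (ler_norm _) h1). lra.
- have [n Hn] := polyrcf.poly_lim_infty (B + 1) gt0 sp.
  have := Hn n (lexx n); have := H n => h1 h2.
  have := le_trans h2 (le_trans (ler_norm _) h1). lra.
Qed.

Definition psub {R : comRingType} {k : nat} (p : mpoly.mpoly k R) (v : 'I_k -> {poly R}) : {poly R} :=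
  \sum_(m <- mpoly.msupp p) mpoly.mcoeff m p *: \prod_i v i ^+ mpoly.fun_of_multinom m i.

Lemma psubE (R : comRingType) k (p : mpoly.mpoly k R) (v : 'I_k -> {poly R}) t :
  (psub p v).[t] = mpoly.meval (fun i => (v i).[t]) p.
Proof.
rewrite mpoly.mevalE /psub horner_sum; apply: eq_bigr => m _.
rewrite hornerZ horner_prod; congr (_ * _); apply: eq_bigr => i _.
by rewrite horner_exp.
Qed.

Theorem lemma2p1 (R : realType) (n m : nat) (X : set 'rV[R]_m)
  (f : 'I_m -> mpoly.mpoly n R) (K : set 'rV[R]_n) :
  algebraic_set X -> compact X ->
  compact K -> (K°) !=set0 ->
  polymap f @` K `<=` X ->
  exists y : 'rV[R]_m, polymap f @` K = [set y] /\ X y.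
Proof.
move=> [k [P ->]] cX cK [x0 Kx0] fKX.
have Kx0' : K x0 by apply: interior_subset.
have /nbhs_ballP [e /= e0 be] : nbhs x0 K := Kx0.
have [M [_ HM]] := compact_bounded cX.
have hB : forall y : 'rV[R]_m, (forall j, peval (P j) y = 0) -> `|y| <= M + 1.
  by move=> y Hy; apply: (HM (M + 1)) => //; lra.
suff Hc : forall x, polymap f x = polymap f x0.
  exists (polymap f x0); split.
    apply/seteqP; split => y /=.
      by case=> x Kx <-; rewrite Hc.
    by move=> ->; exists x0.
  by apply: fKX; exists x0.
move=> x.
pose d := x - x0.
pose lin t := x0 + t *: d.
pose Q i := psub (f i) (fun l => (x0 ord0 l)%:P + d ord0 l *: 'X).
have HQ : forall i t, (Q i).[t] = peval (f i) (lin t).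
  move=> i t; rewrite psubE /peval; apply: mpoly.meval_eq => l.
  by rewrite !mxE hornerD hornerC hornerZ hornerX mulrC.
have H1 : forall t j, peval (P j) (polymap f (lin t)) = 0.
  move=> t j.
  pose G := psub (P j) Q.
  have HG : forall s, G.[s] = peval (P j) (polymap f (lin s)).
    move=> s; rewrite psubE /peval; apply: mpoly.meval_eq => i.
    by rewrite HQ /polymap !mxE.
  have dpos : 0 < `|d| + 1 by have := normr_ge0 d; lra.
  rewrite -HG (@poly_eq0_near0 _ G (e / (`|d| + 1))) ?horner0 //.
    by rewrite divr_gt0.
  move=> s hs; rewrite HG.
  have : (forall j, peval (P j) (polymap f (lin s)) = 0).
    apply: fKX; exists (lin s) => //; apply: be.
    rewrite -ball_normE /ball_ /= /lin opprD addrA subrr add0r normrN normrZ.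
    rewrite ltr_pdivlMr // in hs; apply: le_lt_trans hs.
    by rewrite ler_wpM2l // lerDl.
  by move=> /(_ j).
have H2 : forall i t, `|(Q i).[t]| <= M + 1.
  move=> i t; rewrite HQ.
  apply: le_trans (hB _ (H1 t)).
  have -> : peval (f i) (lin t) = polymap f (lin t) ord0 i by rewrite mxE.
  have -> : `|polymap f (lin t)| = mx_norm (polymap f (lin t)) by [].
  rewrite mx_normrE.
  exact: (le_bigmax _ (fun ij : 'I_1 * 'I_m => `|polymap f (lin t) ij.1 ij.2|) (ord0, i)).
have l1 : lin 1 = x by rewrite /lin scale1r /d addrC subrK.
have l0 : lin 0 = x0 by rewrite /lin scale0r addr0.
apply/rowP => i; rewrite !mxE -l1 -l0 -!HQ.
by rewrite (size1_polyC (@poly_bounded_size _ _ _ (H2 i))) !hornerC.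
Qed.
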